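(* Let $n,m_A,m_B>0$ be integers, $A,B$ quantum systems of dimensions $m_A,m_B$, and $\psi_{AB}$ a bipartite state with $\psi_A=\mathrm{id}_{m_A}/m_A$ and $\psi_B=\mathrm{id}_{m_B}/m_B$. Let $\mathcal{T}:\mathcal{M}(B^n)\to\mathcal{M}(A^n)$ be the Markov super-operator with respect to $\psi_{AB}^{\otimes n}$. Then for every $Q\in\mathcal{M}(B^n)$ and every $S\subseteq[n]$, $\mathcal{T}(Q[S])=\mathcal{T}(Q)[S]$.
   Context: A standard orthonormal basis of $\mathcal{M}_k$ (complex $k\times k$ matrices with inner product $\langle X,Y\rangle=\frac1k\mathrm{Tr}X^\dagger Y$) is an orthonormal basis $\{\mathcal{B}_0,\ldots,\mathcal{B}_{k^2-1}\}$ of Hermitian matrices with $\mathcal{B}_0=\mathrm{id}_k$. For $\sigma\in\{0,\ldots,k^2-1\}^n$ put $\mathcal{B}_\sigma=\mathcal{B}_{\sigma_1}\otimes\cdots\otimes\mathcal{B}_{\sigma_n}$; every $X\in\mathcal{M}_k^{\otimes n}$ has a unique expansion $X=\sum_\sigma\widehat X(\sigma)\mathcal{B}_\sigma$. The Efron–Stein component is $X[S]=\sum_{\sigma:\{i:\sigma_i\neq0\}=S}\widehat X(\sigma)\mathcal{B}_\sigma$; it does not depend on the choice of standard orthonormal basis. On $A^n$ and $B^n$ the inner products are $\langle X,Y\rangle=\frac1{m_A^n}\mathrm{Tr}X^\dagger Y$ and $\frac1{m_B^n}\mathrm{Tr}X^\dagger Y$ respectively. The Markov super-operator with respect to $\psi_{AB}^{\otimes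 n}$ is the map $\mathcal{T}:\mathcal{M}(B^n)\to\mathcal{M}(A^n)$ with $\mathrm{Tr}((M^\dagger\otimes Q)\psi_{AB}^{\otimes n})=\langle M,\mathcal{T}(Q)\rangle$ for all $M\in\mathcal{M}(A^n)$, $Q\in\mathcal{M}(B^n)$. *)

(* Defs.v *)
From HB Require Import structures.
From mathcomp Require Import all_boot all_order all_algebra.
From mathcomp Require Import complex Rstruct.

Set Implicit Arguments.
Unset Strict Implicit.
Unset Printing Implicit Defensive.
Import Order.TTheory GRing.Theory Num.Theory.
Local Open Scope ring_scope.

Definition CC : numClosedFieldType := Rdefinitions.R[i].

Section Ops.
Variable C : numClosedFieldType.

Definition Op (I : finType) := I -> I -> C.

Definition op_id (I : finType) : Op I := fun i j => (i == j)%:R.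
Definition op_adj (I : finType) (X : Op I) : Op I := fun i j => (X j i)^*.
Definition op_mul (I : finType) (X Y : Op I) : Op I :=
  fun i j => \sum_(k : I) X i k * Y k j.
Definition op_tr (I : finType) (X : Op I) : C := \sum_(i : I) X i i.
Definition op_kron (I J : finType) (X : Op I) (Y : Op J) : Op (I * J)%type :=
  fun p q => X p.1 q.1 * Y p.2 q.2.

Definition hermitian (I : finType) (X : Op I) := forall i j, X j i = (X i j)^*.
Definition psd (I : finType) (X : Op I) :=
  hermitian X /\ forall v : I -> C, 0 <= \sum_(i : I) \sum_(j : I) (v i)^* * X i j * v j.
Definition is_state (I : finType) (X : Op I) := psd X /\ op_tr X = 1.

Definition marg_A (I J : finType) (psi : Op (I * J)%type) : Op I :=
  fun a a' => \sum_(b : J) psi (a, b) (a', b).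
Definition marg_B (I J : finType) (psi : Op (I * J)%type) : Op J :=
  fun b b' => \sum_(a : I) psi (a, b) (a, b').

Definition hs_ip (I : finType) (X Y : Op I) : C :=
  (#|I|%:R)^-1 * op_tr (op_mul (op_adj X) Y).

(* index set of the n-fold system with local dimension m: (C^m)^{(x) n} *)
Definition Idx (m n : nat) := {ffun 'I_n -> 'I_m}.

Definition std_onb (k : nat) (Bs : 'I_(k ^ 2) -> Op 'I_k) :=
  [/\ forall p, hermitian (Bs p),
      forall p q, hs_ip (Bs p) (Bs q) = (p == q)%:R &
      forall p : 'I_(k ^ 2), val p = 0%N -> Bs p = @op_id _].

Definition basis_tensor (k n : nat) (Bs : 'I_(k ^ 2) -> Op 'I_k)
  (sigma : {ffun 'I_n -> 'I_(k ^ 2)}) : Op (Idx k n) :=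
  fun i j => \prod_(t < n) Bs (sigma t) (i t) (j t).

Definition supp (k n : nat) (sigma : {ffun 'I_n -> 'I_(k ^ 2)}) : {set 'I_n} :=
  [set t | val (sigma t) != 0%N].

Definition is_expansion (k n : nat) (Bs : 'I_(k ^ 2) -> Op 'I_k) (X : Op (Idx k n))
  (c : {ffun 'I_n -> 'I_(k ^ 2)} -> C) :=
  forall i j, X i j = \sum_(sigma : {ffun 'I_n -> 'I_(k ^ 2)}) c sigma * basis_tensor Bs sigma i j.

Definition es_comp (k n : nat) (Bs : 'I_(k ^ 2) -> Op 'I_k)
  (c : {ffun 'I_n -> 'I_(k ^ 2)} -> C) (S : {set 'I_n}) : Op (Idx k n) :=
  fun i j => \sum_(sigma : {ffun 'I_n -> 'I_(k ^ 2)} | supp sigma == S)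
               c sigma * basis_tensor Bs sigma i j.

(* psi^{(x) n}, viewed (after the canonical reordering (AB)^n ~ A^n B^n)
   as an operator on C^(A^n) (x) C^(B^n) *)
Definition state_pow (mA mB n : nat) (psi : Op ('I_mA * 'I_mB)%type) :
  Op (Idx mA n * Idx mB n)%type :=
  fun p q => \prod_(t < n) psi (p.1 t, p.2 t) (q.1 t, q.2 t).

Definition is_markov (mA mB n : nat) (psi : Op ('I_mA * 'I_mB)%type)
  (T : Op (Idx mB n) -> Op (Idx mA n)) :=
  forall (M : Op (Idx mA n)) (Q : Op (Idx mB n)),
    op_tr (op_mul (op_kron (op_adj M) Q) (@state_pow mA mB n psi)) = hs_ip M (T Q).

End Ops.

(* Main.v *)
Require Import Defs.
From HB Require Import structures.
From mathcomp Require Import all_boot all_order all_algebra.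
From mathcomp Require Import complex Rstruct.
From mathcomp Require Import ring.
From Stdlib Require Import FunctionalExtensionality.
Import GRing.Theory Num.Theory.
Local Open Scope ring_scope.

Set Implicit Arguments.
Unset Strict Implicit.
Unset Printing Implicit Defensive.

Section S.
Variable C : numClosedFieldType.

Lemma hs_ipE (I : finType) (X Y : Op C I) :
  hs_ip X Y = (#|I|%:R)^-1 * \sum_i \sum_k (X k i)^* * Y k i.
Proof. by []. Qed.

Lemma sum_mxvec k (G : 'I_(k * k) -> C) :
  \sum_c G c = \sum_a \sum_b G (mxvec_index a b).
Proof.
rewrite (reindex _ (curry_mxvec_bij _ _)) /= pair_bigA.
by apply: eq_bigr => -[a b].
Qed.

Lemma onb_complete k (Bs : 'I_(k ^ 2) -> Op C 'I_k)
  (h : forall p q, hs_ip (Bs p) (Bs q) = (p == q)%:R) (hk : (0 < k)%N)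
  (X : Op C 'I_k) i j : X i j = \sum_p hs_ip (Bs p) X * Bs p i j.
Proof.
pose A : 'M[C]_(k * k) := \matrix_(p, c) mxvec (\matrix_(a, b) Bs p a b) 0 c.
pose Bm : 'M[C]_(k * k) := (k%:R)^-1 *: (map_mx Num.conj A)^T.
have AB : A *m Bm = 1%:M.
  apply/matrixP => p q; rewrite !mxE.
  transitivity (hs_ip (Bs q) (Bs p)); last by rewrite h eq_sym.
  rewrite hs_ipE card_ord /A /Bm.
  rewrite sum_mxvec [in RHS]exchange_big /= mulr_sumr; apply: eq_bigr => a _.
  rewrite mulr_sumr; apply: eq_bigr => b _.
  by rewrite !mxE !mxvecE !mxE mulrCA [_ * (Bs p a b)]mulrC.
have /matrixP BA := mulmx1C AB.
have key : forall a b a' b', \sum_p (k%:R)^-1 * (Bs p a b)^* * Bs p a' b' = ((a == a') && (b == b'))%:R.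
  move=> a b a' b'; have := BA (mxvec_index a b) (mxvec_index a' b').
  rewrite !mxE => E.
  transitivity ((mxvec_index a b == mxvec_index a' b')%:R : C); last first.
    congr (_ %:R).
    have inj : injective (uncurry (@mxvec_index k k)) := bij_inj (onT_bij (curry_mxvec_bij k k)).
    have := inj_eq inj (a, b) (a', b'); rewrite /= xpair_eqE => ->; done.
  etransitivity; last exact: E.
  apply: eq_bigr => p _.
  by rewrite !mxE !mxvecE !mxE.
transitivity (\sum_a \sum_b X a b * ((a == i) && (b == j))%:R).
  rewrite (bigD1 i) //= (bigD1 j) //= !eqxx mulr1 big1 ?addr0.
    rewrite big1 ?addr0 // => a /negbTE ->; rewrite big1 // => b _; by rewrite mulr0.
  by move=> b /negbTE ->; rewrite andbF mulr0.
under eq_bigr do under eq_bigr do rewrite -key mulr_sumr.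
under eq_bigr do rewrite exchange_big.
rewrite exchange_big; apply: eq_bigr => p _.
rewrite hs_ipE card_ord [in RHS]exchange_big /= mulr_sumr mulr_suml.
apply: eq_bigr => a _; rewrite mulr_sumr mulr_suml; apply: eq_bigr => b _.
ring.
Qed.

Lemma sum_ffun (I : finType) n (G : 'I_n -> I -> C) :
  \sum_(f : {ffun 'I_n -> I}) \prod_t G t (f t) = \prod_t \sum_i G t i.
Proof. by rewrite bigA_distr_bigA. Qed.

Lemma sum_pair (I J : finType) (G : I * J -> C) :
  \sum_p G p = \sum_a \sum_b G (a, b).
Proof. by rewrite pair_bigA; apply: eq_bigr => -[]. Qed.

Lemma sum3_swap (I J K : finType) (f : I -> J -> K -> C) :
  \sum_a \sum_b \sum_t f a b t = \sum_t \sum_a \sum_b f a b t.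
Proof.
transitivity (\sum_a \sum_t \sum_b f a b t).
  by apply: eq_bigr => a _; rewrite exchange_big.
by rewrite exchange_big.
Qed.

Lemma hs_ip_tens k n (X Y : 'I_n -> Op C 'I_k) :
  hs_ip (fun i j : Idx k n => \prod_t X t (i t) (j t))
        (fun i j : Idx k n => \prod_t Y t (i t) (j t)) = \prod_t hs_ip (X t) (Y t).
Proof.
rewrite hs_ipE.
transitivity (#|Idx k n|%:R^-1 * \prod_t \sum_a \sum_b (X t b a)^* * Y t b a).
  congr (_ * _).
  transitivity (\sum_(i : Idx k n) \prod_t \sum_b (X t b (i t))^* * Y t b (i t)).
    apply: eq_bigr => i _.
    rewrite -(sum_ffun (fun t b => (X t b (i t))^* * Y t b (i t))).
    by apply: eq_bigr => kk _; rewrite rmorph_prod -big_split.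
  exact: (sum_ffun (fun t a => \sum_b (X t b a)^* * Y t b a)).
rewrite [RHS]big_split /= prodr_const card_ffun !card_ord natrX exprVn.
by [].
Qed.

Lemma prod_bool n (b : 'I_n -> bool) : \prod_t ((b t)%:R : C) = ([forall t, b t])%:R.
Proof.
case: (boolP [forall t, b t]) => [/forallP H|].
  by rewrite big1 // => t _; rewrite H.
rewrite negb_forall => /existsP [t ht].
by rewrite (bigD1 t) //= (negbTE ht) mul0r.
Qed.

Lemma ffun_eqE n (I : finType) (f g : {ffun 'I_n -> I}) : (f == g) = [forall t, f t == g t].
Proof.
apply/eqP/forallP => [-> t //|H]; apply/ffunP => t; exact/eqP.
Qed.

Lemma tens_ortho k n (Bs : 'I_(k ^ 2) -> Op C 'I_k)
  (h : forall p q, hs_ip (Bs p) (Bs q) = (p == q)%:R) (s s' : {ffun 'I_n -> 'I_(k ^ 2)}) :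
  hs_ip (basis_tensor Bs s) (basis_tensor Bs s') = (s == s')%:R.
Proof.
rewrite (hs_ip_tens (fun t => Bs (s t)) (fun t => Bs (s' t))).
under eq_bigr do rewrite h.
by rewrite prod_bool ffun_eqE.
Qed.

Definition Fm mA mB n (psi : Op C ('I_mA * 'I_mB)%type) (M : Op C (Idx mA n)) (Q : Op C (Idx mB n)) :=
  op_tr (op_mul (op_kron (op_adj M) Q) (state_pow psi)).

Definition F1 mA mB (psi : Op C ('I_mA * 'I_mB)%type) (X : Op C 'I_mA) (Y : Op C 'I_mB) :=
  \sum_a \sum_b \sum_c \sum_d (X c a)^* * Y b d * psi (c, d) (a, b).

Lemma FmE mA mB n (psi : Op C ('I_mA * 'I_mB)%type) M Q :
  @Fm mA mB n psi M Q = \sum_a \sum_b \sum_c \sum_d (M c a)^* * Q b d * state_pow psi (c, d) (a, b).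
Proof.
rewrite /Fm /op_tr /op_mul /op_kron /op_adj sum_pair; apply: eq_bigr => a _.
apply: eq_bigr => b _; rewrite sum_pair; apply: eq_bigr => c _; by apply: eq_bigr => d _.
Qed.

Lemma sum_ffun4 n (I1 I2 I3 I4 : finType) (h : 'I_n -> I1 -> I2 -> I3 -> I4 -> C) :
  \sum_(a : {ffun 'I_n -> I1}) \sum_(b : {ffun 'I_n -> I2}) \sum_(c : {ffun 'I_n -> I3})
    \sum_(d : {ffun 'I_n -> I4}) \prod_t h t (a t) (b t) (c t) (d t)
  = \prod_t \sum_a \sum_b \sum_c \sum_d h t a b c d.
Proof.
transitivity (\sum_(a : {ffun 'I_n -> I1}) \sum_(b : {ffun 'I_n -> I2}) \sum_(c : {ffun 'I_n -> I3})
    \prod_t \sum_d h t (a t) (b t) (c t) d).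
  apply: eq_bigr => a _; apply: eq_bigr => b _; apply: eq_bigr => c _.
  exact: (sum_ffun (fun t d => h t (a t) (b t) (c t) d)).
transitivity (\sum_(a : {ffun 'I_n -> I1}) \sum_(b : {ffun 'I_n -> I2})
    \prod_t \sum_c \sum_d h t (a t) (b t) c d).
  apply: eq_bigr => a _; apply: eq_bigr => b _.
  exact: (sum_ffun (fun t c => \sum_d h t (a t) (b t) c d)).
transitivity (\sum_(a : {ffun 'I_n -> I1})
    \prod_t \sum_b \sum_c \sum_d h t (a t) b c d).
  apply: eq_bigr => a _.
  exact: (sum_ffun (fun t b => \sum_c \sum_d h t (a t) b c d)).
exact: (sum_ffun (fun t a => \sum_b \sum_c \sum_d h t a b c d)).
Qed.

Lemma Fm_tens mA mB n (psi : Op C ('I_mA * 'I_mB)%type) (X : 'I_n -> Op C 'I_mA) (Y : 'I_n -> Op C 'I_mB) :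
  Fm psi (fun i j : Idx mA n => \prod_t X t (i t) (j t)) (fun i j : Idx mB n => \prod_t Y t (i t) (j t))
  = \prod_t F1 psi (X t) (Y t).
Proof.
rewrite FmE /F1.
rewrite -(sum_ffun4 (fun t a b c d => (X t c a)^* * Y t b d * psi (c, d) (a, b))).
apply: eq_bigr => a _; apply: eq_bigr => b _; apply: eq_bigr => c _; apply: eq_bigr => d _.
by rewrite /state_pow rmorph_prod -!big_split.
Qed.

Lemma hs_ip_sumr (I T : finType) (M Q : Op C I) (c : T -> C) (Z : T -> Op C I) :
  (forall i j, Q i j = \sum_t c t * Z t i j) -> hs_ip M Q = \sum_t c t * hs_ip M (Z t).
Proof.
move=> H; rewrite hs_ipE.
transitivity (#|I|%:R^-1 * \sum_t \sum_i \sum_k c t * ((M k i)^* * Z t k i)).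
  congr (_ * _); rewrite -sum3_swap; apply: eq_bigr => i _; apply: eq_bigr => k _.
  by rewrite H mulr_sumr; apply: eq_bigr => t _; ring.
rewrite mulr_sumr; apply: eq_bigr => t _; rewrite hs_ipE mulrCA; congr (_ * _).
by rewrite mulr_sumr; apply: eq_bigr => i _; rewrite mulr_sumr.
Qed.

Lemma hs_ip_suml (I T : finType) (M Q : Op C I) (c : T -> C) (Z : T -> Op C I) :
  (forall i j, M i j = \sum_t c t * Z t i j) -> hs_ip M Q = \sum_t (c t)^* * hs_ip (Z t) Q.
Proof.
move=> H; rewrite hs_ipE.
transitivity (#|I|%:R^-1 * \sum_t \sum_i \sum_k (c t)^* * ((Z t k i)^* * Q k i)).
  congr (_ * _); rewrite -sum3_swap; apply: eq_bigr => i _; apply: eq_bigr => k _.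
  rewrite H rmorph_sum mulr_suml; apply: eq_bigr => t _; rewrite rmorphM /=; ring.
rewrite mulr_sumr; apply: eq_bigr => t _; rewrite hs_ipE mulrCA; congr (_ * _).
by rewrite mulr_sumr; apply: eq_bigr => i _; rewrite mulr_sumr.
Qed.

Lemma sum5_swap (I J K L T : finType) (f : I -> J -> K -> L -> T -> C) :
  \sum_a \sum_b \sum_c \sum_d \sum_t f a b c d t = \sum_t \sum_a \sum_b \sum_c \sum_d f a b c d t.
Proof.
transitivity (\sum_a \sum_b \sum_t \sum_c \sum_d f a b c d t).
  by apply: eq_bigr => a _; apply: eq_bigr => b _; rewrite sum3_swap.
by rewrite sum3_swap.
Qed.

Lemma Fm_sumr mA mB n (psi : Op C ('I_mA * 'I_mB)%type) (T : finType) M (Q : Op C (Idx mB n))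
   (c : T -> C) (Z : T -> Op C (Idx mB n)) :
  (forall i j, Q i j = \sum_t c t * Z t i j) -> Fm psi M Q = \sum_t c t * Fm psi M (Z t).
Proof.
move=> H; rewrite FmE.
under eq_bigr => a _ do under eq_bigr => b _ do under eq_bigr => c0 _ do under eq_bigr => d _ do
  rewrite H mulr_sumr mulr_suml.
rewrite sum5_swap; apply: eq_bigr => t _; rewrite FmE.
rewrite mulr_sumr; apply: eq_bigr => a _; rewrite mulr_sumr; apply: eq_bigr => b _.
rewrite mulr_sumr; apply: eq_bigr => c0 _; rewrite mulr_sumr; apply: eq_bigr => d _.
ring.
Qed.

Lemma Fm_suml mA mB n (psi : Op C ('I_mA * 'I_mB)%type) (T : finType) (M : Op C (Idx mA n)) Q
   (c : T -> C) (Z : T -> Op C (Idx mA n)) :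
  (forall i j, M i j = \sum_t c t * Z t i j) -> Fm psi M Q = \sum_t (c t)^* * Fm psi (Z t) Q.
Proof.
move=> H; rewrite FmE.
under eq_bigr => a _ do under eq_bigr => b _ do under eq_bigr => c0 _ do under eq_bigr => d _ do
  rewrite H rmorph_sum !mulr_suml.
rewrite sum5_swap; apply: eq_bigr => t _; rewrite FmE.
rewrite mulr_sumr; apply: eq_bigr => a _; rewrite mulr_sumr; apply: eq_bigr => b _.
rewrite mulr_sumr; apply: eq_bigr => c0 _; rewrite mulr_sumr; apply: eq_bigr => d _.
rewrite rmorphM /=; ring.
Qed.

Lemma coef_ext k n (Bs : 'I_(k ^ 2) -> Op C 'I_k)
  (h : forall p q, hs_ip (Bs p) (Bs q) = (p == q)%:R) (X : Op C (Idx k n)) c (hX : is_expansion Bs X c) s :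
  hs_ip (basis_tensor Bs s) X = c s.
Proof.
rewrite (hs_ip_sumr _ hX) (bigD1 s) //= tens_ortho // eqxx mulr1 big1 ?addr0 //.
by move=> s' ne; rewrite tens_ortho // eq_sym (negbTE ne) mulr0.
Qed.

Lemma delta_exp k n (Bs : 'I_(k ^ 2) -> Op C 'I_k)
  (h : forall p q, hs_ip (Bs p) (Bs q) = (p == q)%:R) (hk : (0 < k)%N) (k0 i0 : Idx k n) i j :
  (((i == k0) && (j == i0))%:R : C) =
  \sum_(s : {ffun 'I_n -> 'I_(k ^ 2)}) (\prod_t hs_ip (Bs (s t)) (fun a b => ((a == k0 t) && (b == i0 t))%:R)) * basis_tensor Bs s i j.
Proof.
transitivity (\prod_t (((i t == k0 t) && (j t == i0 t))%:R : C)).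
  rewrite prod_bool; congr ((nat_of_bool _) %:R).
  apply/andP/forallP => [[/eqP-> /eqP->] t|H]; first by rewrite !eqxx.
  by split; apply/eqP/ffunP => t; have /andP[/eqP ? /eqP ?] := H t.
transitivity (\prod_t \sum_p hs_ip (Bs p) (fun a b => ((a == k0 t) && (b == i0 t))%:R) * Bs p (i t) (j t)).
  apply: eq_bigr => t _.
  exact: (onb_complete h hk (fun a b => ((a == k0 t) && (b == i0 t))%:R) (i t) (j t)).
rewrite -(sum_ffun (fun t p => hs_ip (Bs p) (fun a b => ((a == k0 t) && (b == i0 t))%:R) * Bs p (i t) (j t))).
by apply: eq_bigr => s _; rewrite big_split.
Qed.

Lemma natb (b : bool) : ((b%:R : C) = if b then 1 else 0).
Proof. by case: b. Qed.

Lemma F1_id_r mA mB (psi : Op C ('I_mA * 'I_mB)%type)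
  (hA : marg_A psi = fun a a' => (a == a')%:R / mA%:R) (X : Op C 'I_mA) :
  F1 psi X (@op_id C 'I_mB) = hs_ip X (@op_id C 'I_mA).
Proof.
rewrite /F1 hs_ipE card_ord.
transitivity (\sum_a \sum_c (X c a)^* * marg_A psi c a).
  apply: eq_bigr => a _; rewrite exchange_big /=; apply: eq_bigr => c _.
  rewrite /marg_A mulr_sumr; apply: eq_bigr => b _.
  rewrite (bigD1 b) //= /op_id eqxx mulr1 big1 ?addr0 // => d ne.
  by rewrite natb [b == d]eq_sym (negbTE ne) mulr0 mul0r.
rewrite hA /= mulr_sumr; apply: eq_bigr => a _; rewrite mulr_sumr; apply: eq_bigr => c _.
rewrite /op_id; ring.
Qed.

Lemma F1_id_l mA mB (psi : Op C ('I_mA * 'I_mB)%type)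
  (hB : marg_B psi = fun b b' => (b == b')%:R / mB%:R) (Y : Op C 'I_mB) :
  F1 psi (@op_id C 'I_mA) Y = hs_ip (@op_id C 'I_mB) Y.
Proof.
rewrite /F1 hs_ipE card_ord.
transitivity (\sum_b \sum_d Y b d * marg_B psi d b).
  rewrite exchange_big; apply: eq_bigr => b _; rewrite sum3_swap; apply: eq_bigr => d _.
  rewrite /marg_B mulr_sumr; apply: eq_bigr => a _.
  rewrite (bigD1 a) //= /op_id eqxx conjC_nat mul1r big1 ?addr0 // => c ne.
  by rewrite natb (negbTE ne) rmorph0 !mul0r.
rewrite hB /= [in RHS]exchange_big mulr_sumr; apply: eq_bigr => b _; rewrite mulr_sumr; apply: eq_bigr => d _.
rewrite /op_id conjC_nat [d == b]eq_sym; ring.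
Qed.

Lemma Fm_zero mA mB n (psi : Op C ('I_mA * 'I_mB)%type)
  (hA : marg_A psi = fun a a' => (a == a')%:R / mA%:R)
  (hB : marg_B psi = fun b b' => (b == b')%:R / mB%:R)
  (hmA : (0 < mA)%N) (hmB : (0 < mB)%N)
  (BsA : 'I_(mA ^ 2) -> Op C 'I_mA) (hBsA : std_onb BsA)
  (BsB : 'I_(mB ^ 2) -> Op C 'I_mB) (hBsB : std_onb BsB)
  (s : {ffun 'I_n -> 'I_(mA ^ 2)}) (u : {ffun 'I_n -> 'I_(mB ^ 2)}) :
  supp s != supp u -> Fm psi (basis_tensor BsA s) (basis_tensor BsB u) = 0.
Proof.
have [_ ortA idA] := hBsA; have [_ ortB idB] := hBsB.
move=> ne.
have /existsP[t ht] : [exists t, (t \in supp s) != (t \in supp u)].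
  rewrite -negb_forall; apply: contra ne => /forallP H; apply/eqP/setP => t.
  exact/eqP/H.
transitivity (\prod_t F1 psi (BsA (s t)) (BsB (u t))); first exact: Fm_tens.
rewrite (bigD1 t) //=; apply/eqP; rewrite mulf_eq0; apply/orP; left; apply/eqP.
rewrite !inE in ht.
have mA2 : (0 < mA ^ 2)%N by rewrite expn_gt0 hmA.
have mB2 : (0 < mB ^ 2)%N by rewrite expn_gt0 hmB.
case: (eqVneq (val (s t)) 0%N) => e1; case: (eqVneq (val (u t)) 0%N) => e2;
  rewrite ?e1 ?e2 //= in ht.
  rewrite (idA _ e1) F1_id_l // -(idB (Ordinal mB2)) // ortB natb.
  by case: eqP => // /(congr1 val) /= E; exfalso; move/eqP: e2; apply; exact: esym E.
rewrite (idB _ e2) F1_id_r // -(idA (Ordinal mA2)) // ortA natb.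
by case: eqP => // /(congr1 val) /= E; exfalso; move/eqP: e1; apply; exact: E.
Qed.
End S.

Theorem proposition3p12 (n mA mB : nat) (hn : (0 < n)%N) (hmA : (0 < mA)%N) (hmB : (0 < mB)%N)
  (psi : Op CC ('I_mA * 'I_mB)%type) (hpsi : is_state psi)
  (hpsiA : marg_A psi = fun a a' => (a == a')%:R / mA%:R)
  (hpsiB : marg_B psi = fun b b' => (b == b')%:R / mB%:R)
  (T : Op CC (Idx mB n) -> Op CC (Idx mA n)) (hT : is_markov psi T)
  (BsA : 'I_(mA ^ 2) -> Op CC 'I_mA) (hBsA : std_onb BsA)
  (BsB : 'I_(mB ^ 2) -> Op CC 'I_mB) (hBsB : std_onb BsB)
  (Q : Op CC (Idx mB n)) (S : {set 'I_n})
  (cQ : {ffun 'I_n -> 'I_(mB ^ 2)} -> CC) (hcQ : is_expansion BsB Q cQ)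
  (cTQ : {ffun 'I_n -> 'I_(mA ^ 2)} -> CC) (hcTQ : is_expansion BsA (T Q) cTQ) :
  T (es_comp BsB cQ S) = es_comp BsA cTQ S.
Proof.
have hBsA' := hBsA; have hBsB' := hBsB.
have [_ ortA idA] := hBsA; have [_ ortB idB] := hBsB.
have hT' : forall M Q', Fm psi M Q' = hs_ip M (T Q') := hT.
have Fz := Fm_zero hpsiA hpsiB hmA hmB hBsA' hBsB'.
pose N := #|Idx mA n|.
have N0 : (N%:R : CC) != 0.
  by rewrite pnatr_eq0 -lt0n /N card_ffun !card_ord expn_gt0 hmA.
have Ed : forall (k0 i0 : Idx mA n) (Y : Op CC (Idx mA n)),
    Y k0 i0 = N%:R * hs_ip (fun i j => ((i == k0) && (j == i0))%:R) Y.
  move=> k0 i0 Y; rewrite hs_ipE mulrA mulfV // mul1r.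
  rewrite (bigD1 i0) //= (bigD1 k0) //= !eqxx conjC_nat mul1r big1 ?addr0.
    rewrite big1 ?addr0 // => i ne; apply: big1 => kk _.
    by rewrite (negbTE ne) andbF conjC_nat mul0r.
  by move=> kk ne; rewrite (negbTE ne) conjC_nat mul0r.
apply: functional_extensionality => k0; apply: functional_extensionality => i0.
rewrite (Ed k0 i0 (T (es_comp BsB cQ S))) (Ed k0 i0 (es_comp BsA cTQ S)) -hT'; congr (_ * _).
have hE := delta_exp ortA hmA k0 i0.
rewrite (@Fm_suml _ _ _ _ psi _ _ _ _ _ hE) (@hs_ip_suml _ _ _ _ _ _ _ hE).
apply: eq_bigr => s _; congr (_ * _).
have hQS : forall i j, es_comp BsB cQ S i j =
    \sum_u (if supp u == S then cQ u else 0) * basis_tensor BsB u i j.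
  by move=> i j; rewrite /es_comp big_mkcond; apply: eq_bigr => u _; case: ifP; rewrite ?mul0r.
have hES : forall i j, es_comp BsA cTQ S i j =
    \sum_u (if supp u == S then cTQ u else 0) * basis_tensor BsA u i j.
  by move=> i j; rewrite /es_comp big_mkcond; apply: eq_bigr => u _; case: ifP; rewrite ?mul0r.
rewrite (@Fm_sumr _ _ _ _ psi _ _ _ _ _ hQS) (coef_ext ortA hES).
have hc : cTQ s = \sum_u cQ u * Fm psi (basis_tensor BsA s) (basis_tensor BsB u).
  by rewrite -(coef_ext ortA hcTQ) -hT' (@Fm_sumr _ _ _ _ psi _ _ _ _ _ hcQ).
cbv beta.
case Hs: (supp s == S); move/eqP: Hs => Hs.
  rewrite hc; apply: eq_bigr => u _; case: ifP => [//|/eqP Hu].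
  rewrite Fz ?mulr0 //; apply/eqP => E; apply: Hu; exact: (etrans (esym E) Hs).
apply: big1 => u _; case: ifP => [/eqP Hu|_]; last by rewrite mul0r.
rewrite Fz ?mulr0 //; apply/eqP => E; apply: Hs; exact: (etrans E Hu).
Qed.
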